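(* Let $n\in\mathbb N$ and $i\in\{1,2\}$. Then $r(P_n,T_n^i)=2n-7$ for $n\ge 17$; $r(P_{n-1},T_n^i)=2n-7$ for $n\ge 13$; $r(P_{n-2},T_n^i)=2n-7$ for $n\ge 11$; and $r(P_{n-3},T_n^i)=2n-7$ for $n\ge 8$.
   Context: All graphs are finite and simple; a graph ''contains'' $H$ if it has a subgraph isomorphic to $H$. $P_m$ denotes the path on $m$ vertices. For graphs $G_1,G_2$, the Ramsey number $r(G_1,G_2)$ is the smallest positive integer $N$ such that for every graph $G$ on $N$ vertices, either $G$ contains a copy of $G_1$ or the complement $\overline G$ contains a copy of $G_2$. For $n\ge 5$, $T_n^1$ is the tree with vertex set $\{v_0,\ldots,v_{n-1}\}$ and edges $v_0v_1,\ldots,v_0v_{n-3},v_{n-4}v_{n-2},v_{n-3}v_{n-1}$, and $T_n^2$ is the tree on the same vertex set with edges $v_0v_1,\ldots,v_0v_{n-3},v_{n-3}v_{n-2},v_{n-3}v_{n-1}$. *)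

(* Defs.v *)
From mathcomp Require Import all_boot.
Set Implicit Arguments. Unset Strict Implicit. Unset Printing Implicit Defensive.

Definition simple_graph (N : nat) (g : rel 'I_N) : Prop :=
  symmetric g /\ irreflexive g.

Definition compl_graph (N : nat) (g : rel 'I_N) : rel 'I_N :=
  fun x y => (x != y) && ~~ g x y.

(* A pattern graph H on vertex set {0,...,m-1}, given by an adjacency
   relation h on nat (only its restriction to 'I_m matters). *)
Definition contains (m : nat) (h : rel nat) (N : nat) (g : rel 'I_N) : Prop :=
  exists f : 'I_m -> 'I_N, injective f /\
    forall x y : 'I_m, h x y -> g (f x) (f y).

Definition ramsey_prop (m1 : nat) (h1 : rel nat) (m2 : nat) (h2 : rel nat)
  (N : nat) : Prop :=
  forall g : rel 'I_N, simple_graph g ->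
    contains m1 h1 g \/ contains m2 h2 (compl_graph g).

Definition ramsey_number_is (m1 : nat) (h1 : rel nat) (m2 : nat) (h2 : rel nat)
  (R : nat) : Prop :=
  0 < R /\ ramsey_prop m1 h1 m2 h2 R /\
  forall M, 0 < M -> M < R -> ~ ramsey_prop m1 h1 m2 h2 M.

Definition path_adj : rel nat := fun i j => (i.+1 == j) || (j.+1 == i).

(* Directed edge lists of T_n^1 and T_n^2 (vertex v_k is k). *)
Definition T1_edge (n : nat) : rel nat := fun i j =>
  [|| (i == 0) && (1 <= j <= n - 3),
      (i == n - 4) && (j == n - 2) |
      (i == n - 3) && (j == n - 1)].

Definition T2_edge (n : nat) : rel nat := fun i j =>
  [|| (i == 0) && (1 <= j <= n - 3),
      (i == n - 3) && (j == n - 2) |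
      (i == n - 3) && (j == n - 1)].

Definition sym_closure (e : rel nat) : rel nat := fun i j => e i j || e j i.

Definition T_adj (n i : nat) : rel nat :=
  if i == 1 then sym_closure (T1_edge n) else sym_closure (T2_edge n).

(* Main.v *)
Require Import Defs.
From mathcomp Require Import all_boot.
From mathcomp Require Import zify.
From Stdlib Require Import Classical_Prop.
Set Implicit Arguments. Unset Strict Implicit. Unset Printing Implicit Defensive.

Section Gen.
Variable T : eqType.
Variable g : rel T.
Hypothesis gs : symmetric g.

Lemma cyc_build x a y0 b' :
  path g x (a ++ y0 :: b') -> g x y0 -> g (last y0 b') (last x a) ->
  cycle g (x :: a ++ rev (y0 :: b')).
Proof.
move=> Hp Hxy Hl; rewrite /= rcons_cat cat_path.
move: Hp; rewrite cat_path => /andP[-> /= /andP[Hly Hb]].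
rewrite lastI rev_rcons rcons_cons /= rcons_path.
have Hr : path g (last y0 b') (rev (belast y0 b')).
  by rewrite rev_path (eq_path (e' := g)) // => u w; rewrite gs.
rewrite Hr gs Hl /=.
have -> : last (last y0 b') (rev (belast y0 b')) = y0.
  by elim/last_ind: b' {Hl Hb Hr} => //= s u _; rewrite belast_rcons rev_cons last_rcons.
by rewrite gs.
Qed.

Lemma cycle_ext (c : seq T) y z : cycle g c -> z \in c -> g y z ->
  exists s, [/\ path g y (z :: s), (z :: s) =i c, size (z :: s) = size c & uniq (z :: s) = uniq c].
Proof.
move=> Hc zc gyz; case: (rot_to zc) => i s Hr.
exists s; split.
2: by move=> w; rewrite -Hr mem_rot.
2: by rewrite -Hr size_rot.
2: by rewrite -Hr rot_uniq.
move: Hc; rewrite -(rot_cycle i) Hr /= rcons_path => /andP[Hp _].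
by rewrite /= gyz.
Qed.

End Gen.


Section Core.
Variable T : finType.
Variable g : rel T.
Hypothesis gs : symmetric g.
Hypothesis gi : irreflexive g.

Definition good (X : {set T}) x q :=
  [&& path g x q, uniq (x :: q) & all (fun z => z \in X) (x :: q)].

Lemma core (X : {set T}) d (x : T) (q : seq T) :
  (forall y, y \in X -> d <= #|[set z in X | g y z]|) ->
  good X x q ->
  (forall x' q', good X x' q' -> size q' <= size q) ->
  size q < 2 * d ->
  forall y z, y \in X -> y \notin x :: q -> z \in x :: q -> ~~ g y z.
Proof.
move=> Hdeg Hg Hmax Hsz.
move: (Hg) => /and3P[Hp Hu Ha].
have S1 : forall z, z \in X -> g x z -> z \in x :: q.
  move=> z zX gxz; case zq: (z \in x :: q) => //.
  have : good X z (x :: q).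
    apply/and3P; split; first by rewrite /= gs gxz.
      by rewrite cons_uniq zq.
    by apply/andP; split.
  by move/Hmax; rewrite /= ltnn.
set l := last x q.
have S2 : forall z, z \in X -> g l z -> z \in x :: q.
  move=> z zX glz; case zq: (z \in x :: q) => //.
  have : good X x (rcons q z).
    apply/and3P; split; first by rewrite rcons_path Hp glz.
      by rewrite -rcons_cons rcons_uniq zq.
    by rewrite -rcons_cons all_rcons zX.
  by move/Hmax; rewrite size_rcons ltnn.
set K := size q.
set A := [seq i <- iota 0 K | g x (nth x q i)].
set B := [seq i <- iota 0 K | g l (nth x (x :: q) i)].
have HA : d <= size A.
  set E := enum [set z in X | g x z].
  have xX : x \in X by move: Ha => /= /andP[].
  apply: (leq_trans (Hdeg _ xX)); rewrite cardE -/E -(size_map (index^~ q)).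
  have EP : forall z, z \in E -> z \in q /\ g x z.
    move=> z; rewrite mem_enum inE => /andP[zX gxz]; split=> //.
    move: (S1 z zX gxz); rewrite inE => /orP[/eqP zx|//].
    by move: gxz; rewrite -zx gi.
  apply: uniq_leq_size.
    rewrite map_inj_in_uniq ?enum_uniq // => z1 z2 /EP[z1q _] /EP[z2q _] /= Heq.
    by rewrite -(nth_index x z1q) Heq nth_index.
  move=> i /mapP[z /EP[zq gxz] ->].
  rewrite mem_filter (nth_index x zq) gxz mem_iota /=.
  by rewrite index_mem.
have lX : l \in X by apply: (allP Ha); rewrite /l mem_last.
have HB : d <= size B.
  set E := enum [set z in X | g l z].
  apply: (leq_trans (Hdeg _ lX)); rewrite cardE -/E -(size_map (index^~ (x :: q))).
  have EP : forall z, z \in E -> z \in x :: q /\ g l z.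
    by move=> z; rewrite mem_enum inE => /andP[zX glz]; split=> //; apply: S2.
  have Hnl : nth x (x :: q) K = l by rewrite -[K]/((size (x :: q)).-1) nth_last.
  apply: uniq_leq_size.
    rewrite map_inj_in_uniq ?enum_uniq // => z1 z2 /EP[z1q _] /EP[z2q _] Heq.
    by rewrite -(nth_index x z1q) Heq nth_index.
  move=> i /mapP[z /EP[zq glz] ->].
  rewrite mem_filter (nth_index x zq) glz mem_iota /=.
  have : index z (x :: q) < K.+1 by rewrite -[K.+1]/(size (x :: q)) index_mem.
  rewrite ltnS leq_eqVlt => /orP[/eqP Hi|//].
  by move: glz; rewrite -(nth_index x zq) Hi Hnl gi.
have [i iA iB] : exists2 i, i \in A & i \in B.
  apply/hasP; apply/negPn/negP => Hn.
  have Hu2 : uniq (A ++ B) by rewrite cat_uniq !filter_uniq ?iota_uniq // has_sym Hn.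
  have : size (A ++ B) <= K.
    rewrite -(size_iota 0 K); apply: (uniq_leq_size Hu2) => j.
    by rewrite mem_cat !mem_filter => /orP[/andP[_ ->]|/andP[_ ->]].
  rewrite size_cat; lia.
move: iA iB; rewrite !mem_filter mem_iota /= => /andP[gxy Hi] /andP[gli _].
set a := take i q; set b' := drop i.+1 q; set y0 := nth x q i.
have Hq : q = a ++ y0 :: b' by rewrite /a /y0 /b' -(drop_nth x) ?cat_take_drop.
have Hl : last y0 b' = l by rewrite /l [in RHS]Hq last_cat.
have Ha' : nth x (x :: q) i = last x a.
  rewrite Hq -cat_cons nth_cat /= size_take Hi ltnSn.
  by rewrite -[last x a]/(last x (x :: a)) -nth_last /= size_take Hi.
have Hcyc : cycle g (x :: a ++ rev (y0 :: b')).
  by apply: cyc_build => //; [rewrite -Hq | rewrite Hl -Ha'].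
have Hperm : perm_eq (x :: a ++ rev (y0 :: b')) (x :: q).
  by rewrite [in X in perm_eq _ X]Hq perm_cons perm_cat2l perm_rev.
move=> y z yX yq zp; apply/negP => gyz.
have zc : z \in x :: a ++ rev (y0 :: b') by rewrite (perm_mem Hperm).
case: (cycle_ext Hcyc zc gyz) => s [Hps Hmem Hsize Huniq].
have : good X y (z :: s).
  apply/and3P; split=> //.
    by rewrite cons_uniq Hmem (perm_mem Hperm) yq Huniq (perm_uniq Hperm).
  apply/allP => w; rewrite in_cons => /orP[/eqP->//|ws]; apply: (allP Ha).
  by rewrite -(perm_mem Hperm) -Hmem.
move/Hmax; rewrite Hsize (perm_size Hperm) /= ltnn; done.
Qed.
End Core.


Lemma max_exists (P : nat -> Prop) k b : P k -> (forall j, P j -> j <= b) ->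
  exists j, P j /\ forall j', P j' -> j' <= j.
Proof.
move=> Pk Hb.
suff : forall n k, b - k < n -> P k -> exists j, P j /\ forall j', P j' -> j' <= j.
  by move/(_ (b - k).+1 k); apply.
elim=> [//|n IH] k' Hn Pk'.
case: (classic (exists j', P j' /\ k' < j')) => [[j' [Pj' Hlt]]|Hno].
  apply: (IH j') => //; have := Hb _ Pj'; have := Hb _ Pk'; lia.
exists k'; split=> // j' Pj'; rewrite leqNgt; apply/negP => Hlt.
by apply: Hno; exists j'.
Qed.

Section Longest.
Variable T : finType.
Variable g : rel T.

Lemma exists_longest (X : {set T}) x0N : x0N \in X ->
  exists x q, good g X x q /\ forall x' q', good g X x' q' -> size q' <= size q.
Proof.
move=> x0X.
have := @max_exists (fun k => exists x q, good g X x q /\ size q = k) 0 #|T|.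
case.
- by exists x0N, [::]; rewrite /good /= x0X.
- move=> j [x [q [/and3P[_ Hu _] <-]]].
  have := card_uniqP Hu; move=> Hc; apply: ltnW.
  by rewrite -[(size q).+1]/(size (x :: q)) -Hc max_card.
- move=> j [[x [q [Hg Hs]]] Hmax]; exists x, q; split=> // x' q' Hg'.
  by rewrite Hs; apply: Hmax; exists x', q'.
Qed.
End Longest.


Lemma path_contains N (g : rel 'I_N) m x q :
  symmetric g -> path g x q -> uniq (x :: q) -> m <= size (x :: q) ->
  contains m path_adj g.
Proof.
move=> gs Hp Hu Hm.
exists (fun j : 'I_m => nth x (x :: q) j); split.
  move=> j k /eqP; rewrite nth_uniq //; first by move/eqP/val_inj.
    exact: leq_trans (ltn_ord j) Hm.
  exact: leq_trans (ltn_ord k) Hm.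
have E : forall j, j.+1 < size (x :: q) -> g (nth x (x :: q) j) (nth x (x :: q) j.+1).
  by move=> j Hj; apply: (pathP x Hp).
move=> j k /orP[/eqP Hk|/eqP Hj].
  by rewrite -Hk; apply: E; rewrite Hk; exact: leq_trans (ltn_ord k) Hm.
by rewrite gs -Hj; apply: E; rewrite Hj; exact: leq_trans (ltn_ord j) Hm.
Qed.


Lemma sym_closure_hom N (H : rel 'I_N) (F : nat -> 'I_N) (e : rel nat) :
  symmetric H -> (forall a b, e a b -> H (F a) (F b)) ->
  forall a b, sym_closure e a b -> H (F a) (F b).
Proof.
by move=> Hs He a b /orP[/He //|/He]; rewrite Hs.
Qed.

Lemma tree_embed N (H : rel 'I_N) n i vmin (Lv : seq 'I_N) w1 w2 :
  symmetric H -> 5 <= n -> size Lv = n - 3 -> uniq (vmin :: Lv ++ [:: w1; w2]) ->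
  (forall l, l \in Lv -> H vmin l) ->
  (i = 1 -> H (nth vmin Lv (n-5)) w1 /\ H (nth vmin Lv (n-4)) w2) ->
  (i <> 1 -> H (nth vmin Lv (n-4)) w1 /\ H (nth vmin Lv (n-4)) w2) ->
  contains n (T_adj n i) H.
Proof.
move=> Hs Hn HL Hu Hv H1 H2.
set lst := vmin :: Lv ++ [:: w1; w2].
have Hsz : size lst = n by rewrite /lst /= size_cat HL /=; lia.
set F := fun j : nat => nth vmin lst j.
have F0 : F 0 = vmin by [].
have FL : forall j, j < size Lv -> F j.+1 = nth vmin Lv j.
  by move=> j Hj; rewrite /F /lst /= nth_cat Hj.
have Fw1 : F (size Lv).+1 = w1 by rewrite /F /lst /= nth_cat ltnn subnn.
have Fw2 : F (size Lv).+2 = w2.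
  rewrite /F /lst /= nth_cat.
  have -> : (size Lv).+1 < size Lv = false by rewrite ltnNge leqnSn.
  by rewrite subSn // subnn.
exists (fun j : 'I_n => F j); split.
  move=> j k /eqP; rewrite /F nth_uniq ?Hsz //; by move/eqP/val_inj.
move=> a b; rewrite /T_adj.
have Hstar : forall b, 1 <= b <= n - 3 -> H (F 0) (F b).
  move=> [|b'] // /andP[_ Hb']; rewrite F0 FL ?HL; last by lia.
  by apply: Hv; apply: mem_nth; rewrite HL; lia.
case: eqP => Hi; apply: (sym_closure_hom Hs) => {a b} a b.
- move: (H1 Hi) => [Hw1 Hw2].
  rewrite /T1_edge => /or3P[/andP[/eqP-> Hb]|/andP[/eqP-> /eqP->]|/andP[/eqP-> /eqP->]].
  + exact: Hstar.
  + have -> : n - 4 = (n - 5).+1 by lia.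
    have -> : n - 2 = (size Lv).+1 by lia.
    by rewrite FL ?Fw1 // HL; lia.
  + have -> : n - 3 = (n - 4).+1 by lia.
    have -> : n - 1 = (size Lv).+2 by lia.
    by rewrite FL ?Fw2 // HL; lia.
- move: (H2 Hi) => [Hw1 Hw2].
  rewrite /T2_edge => /or3P[/andP[/eqP-> Hb]|/andP[/eqP-> /eqP->]|/andP[/eqP-> /eqP->]].
  + exact: Hstar.
  + have -> : n - 3 = (n - 4).+1 by lia.
    have -> : n - 2 = (size Lv).+1 by lia.
    by rewrite FL ?Fw1 // HL; lia.
  + have -> : n - 3 = (n - 4).+1 by lia.
    have -> : n - 1 = (size Lv).+2 by lia.
    by rewrite FL ?Fw2 // HL; lia.
Qed.


Section Lower.
Variables (n M : nat).
Hypothesis HM : M <= 2 * n - 8.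
Hypothesis Hn : 8 <= n.

Definition gl : rel 'I_M := fun x y => (x != y) && ((x < n - 4) == (y < n - 4)).

Lemma gl_simple : simple_graph gl.
Proof.
split; first by move=> x y; rewrite /gl eq_sym; case: eqP => //= _; rewrite eq_sym.
by move=> x; rewrite /gl eqxx.
Qed.

Lemma class_size (s : seq 'I_M) b : uniq s -> (forall x, x \in s -> (x < n - 4) = b) ->
  size s <= n - 4.
Proof.
move=> Hu Hc; rewrite -(size_map val).
have Hu' : uniq (map val s) by rewrite map_inj_uniq //; exact: val_inj.
case: b Hc => Hc.
  rewrite -(size_iota 0 (n - 4)); apply: (uniq_leq_size Hu') => k /mapP[x xs ->].
  by rewrite mem_iota /= Hc.
rewrite -(size_iota (n - 4) (n - 4)); apply: (uniq_leq_size Hu') => k /mapP[[x Hx] xs ->] /=.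
rewrite mem_iota; move: (Hc _ xs) => /= /negbT; rewrite -leqNgt; lia.
Qed.

Lemma gl_nopath m : n - 3 <= m -> ~ contains m path_adj gl.
Proof.
move=> Hm [f [finj Hf]].
case: m Hm f finj Hf => [|m] Hm f finj Hf; first by lia.
set c := (f ord0 < n - 4).
have Hcl : forall k (Hk : k < m.+1), (f (Ordinal Hk) < n - 4) = c.
  elim=> [|k IH] Hk.
    by rewrite /c; congr (f _ < _); apply: val_inj.
  have Hk' : k < m.+1 by apply: ltnW.
  have := Hf (Ordinal Hk') (Ordinal Hk); rewrite /path_adj /= eqxx => /(_ isT).
  by rewrite /gl => /andP[_ /eqP <-]; apply: IH.
have : m.+1 <= n - 4.
  rewrite -{1}(size_enum_ord m.+1) -(size_map f).
  apply: (@class_size (map f (enum 'I_m.+1)) c).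
    by rewrite map_inj_uniq ?enum_uniq.
  move=> x /mapP[[k Hk] _ ->]; exact: Hcl.
lia.
Qed.

Lemma gl_notree i : ~ contains n (T_adj n i) (compl_graph gl).
Proof.
move=> [f [finj Hf]].
have H0 : 0 < n by lia.
have Hl : forall j : 'I_(n - 3), j.+1 < n by move=> j; have := ltn_ord j; lia.
set c := (f (Ordinal H0) < n - 4).
have : n - 3 <= n - 4.
  rewrite -(size_enum_ord (n - 3)) -(size_map (fun j => f (Ordinal (Hl j)))).
  apply: (@class_size _ (~~ c)).
    rewrite map_inj_uniq ?enum_uniq // => j k /finj /(congr1 val) /= [] /val_inj //.
  move=> x /mapP[j _ ->].
  have : T_adj n i (Ordinal H0) (Ordinal (Hl j)).
    rewrite /T_adj /sym_closure /T1_edge /T2_edge /=.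
    have := ltn_ord j; case: (i == 1) => Hj; apply/orP; left; apply/orP; left;
      apply/andP; split=> //; lia.
  move/Hf; rewrite /compl_graph /gl => /andP[_].
  have -> : f (Ordinal H0) != f (Ordinal (Hl j)) by apply/eqP => /finj /(congr1 val).
  rewrite /c /=; case: (f (Ordinal (Hl j)) < n - 4); case: (f (Ordinal H0) < n - 4) => //.
lia.
Qed.

Lemma lower_bound m i : n - 3 <= m -> ~ ramsey_prop m path_adj n (T_adj n i) M.
Proof.
move=> Hm Hr; case: (Hr gl gl_simple); [exact: gl_nopath | exact: gl_notree].
Qed.
End Lower.


Lemma take_set (T : finType) (A : {set T}) k : k <= #|A| ->
  exists L : seq T, [/\ size L = k, uniq L & forall z, z \in L -> z \in A].
Proof.
move=> Hk; exists (take k (enum A)); split.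
- by rewrite size_takel // -cardE.
- by rewrite take_uniq // enum_uniq.
- by move=> z /mem_take; rewrite mem_enum.
Qed.

Lemma clique_path (T : eqType) (g : rel T) x s : uniq (x :: s) ->
  {in x :: s &, forall a b, a != b -> g a b} -> path g x s.
Proof.
elim: s x => [//|y s IH] x Hu Hc /=.
move: Hu; rewrite cons_uniq in_cons negb_or => /andP[/andP[xy xs] Hu].
rewrite Hc ?inE ?eqxx ?orbT //=; apply: IH => // a b Ha Hb; apply: Hc;
  by rewrite in_cons ?Ha ?Hb orbT.
Qed.

Lemma uniq_split (T : eqType) (a b : seq T) : uniq a -> uniq b ->
  (forall x, x \in a -> x \in b -> False) -> uniq (a ++ b).
Proof.
move=> Ha Hb Hd; rewrite cat_uniq Ha Hb andbT /=.
by apply/hasPn => x xb; apply/negP => xa; apply: (Hd x).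
Qed.

Lemma card_D1 (T : finType) (A : {set T}) a : #|A| <= (#|A :\ a|).+1.
Proof. by rewrite (cardsD1 a A); case: (a \in A). Qed.

Lemma bip_embed N (H : rel 'I_N) n i (P Q : {set 'I_N}) :
  symmetric H -> irreflexive H -> 5 <= n -> 3 <= #|P| -> n - 3 <= #|Q| ->
  (forall a b, a \in P -> b \in Q -> H a b) -> contains n (T_adj n i) H.
Proof.
move=> Hs Hi Hn HP HQ Hb.
have [L3 [H3 U3 P3]] := take_set HP.
have [Lv [Hv Uv Qv]] := take_set HQ.
case: L3 H3 U3 P3 => [|vmin [|w1 [|w2 [|? ?]]]] //= _ U3 P3.
have vP : vmin \in P by apply: P3; rewrite inE eqxx.
have w1P : w1 \in P by apply: P3; rewrite !inE eqxx orbT.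
have w2P : w2 \in P by apply: P3; rewrite !inE eqxx !orbT.
have Hnth : forall k, k < n - 3 -> nth vmin Lv k \in Q.
  by move=> k Hk; apply: Qv; apply: mem_nth; rewrite Hv.
apply: (tree_embed (Lv := Lv) (vmin := vmin) (w1 := w1) (w2 := w2)) => //.
- have -> : vmin :: Lv ++ [:: w1; w2] = (vmin :: Lv) ++ [:: w1; w2] by [].
  rewrite uniq_catC -[[:: w1; w2] ++ vmin :: Lv]/([:: w1; w2; vmin] ++ Lv).
  rewrite uniq_catC; apply: uniq_split => //.
    move: U3; rewrite /= !inE !negb_or => /and3P[/andP[vw1 vw2] w12 _].
    by rewrite w12 (eq_sym w1) vw1 (eq_sym w2) vw2.
  move=> x /Qv xQ; rewrite !inE => /or3P[] /eqP xe; move: xQ; rewrite xe => xQ.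
  + by move: (Hb _ _ w1P xQ); rewrite Hi.
  + by move: (Hb _ _ w2P xQ); rewrite Hi.
  + by move: (Hb _ _ vP xQ); rewrite Hi.
- by move=> l /Qv; apply: Hb.
- have h5 : n - 5 < n - 3 by clear -Hn; lia.
  have h4 : n - 4 < n - 3 by clear -Hn; lia.
  by move=> _; split; rewrite Hs; apply: Hb => //; apply: Hnth.
- have h4 : n - 4 < n - 3 by clear -Hn; lia.
  by move=> _; split; rewrite Hs; apply: Hb => //; apply: Hnth.
Qed.


Section Upper.
Variables (n m N : nat) (g : rel 'I_N).
Hypothesis HN : N = 2 * n - 7.
Hypothesis Hn : 8 <= n.
Hypothesis Hm1 : n - 3 <= m.
Hypothesis Hm2 : m <= n.
Hypothesis Hm3 : 3 * m + 16 <= 4 * n.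
Hypothesis Hg : simple_graph g.
Hypothesis NP : ~ contains m path_adj g.

Let H := compl_graph g.
Let gs : symmetric g := proj1 Hg.
Let gi : irreflexive g := proj2 Hg.

Lemma Hsym : symmetric H.
Proof. by move=> a b; rewrite /H /compl_graph eq_sym gs. Qed.
Lemma Hirr : irreflexive H.
Proof. by move=> a; rewrite /H /compl_graph eqxx. Qed.
Lemma Hneq a b : H a b -> a != b.
Proof. by case/andP. Qed.
Lemma notH a b : ~~ H a b -> a != b -> g a b.
Proof. by rewrite /H /compl_graph => /nandP[/negPn->//|/negPn]. Qed.

Lemma short x q : path g x q -> uniq (x :: q) -> size (x :: q) < m.
Proof.
move=> Hp Hu; rewrite ltnNge; apply/negP => Hm; apply: NP.
exact: (path_contains gs Hp Hu Hm).
Qed.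

Lemma N_gt0 : 0 < N.
Proof. by rewrite HN; clear -Hn; lia. Qed.

Definition x0N : 'I_N := Ordinal N_gt0.
Definition deg (y : 'I_N) := #|[set z | g y z]|.
Definition vmin := [arg min_(y < x0N) deg y].
Lemma v_min y : deg vmin <= deg y.
Proof. by rewrite /vmin; case: arg_minnP => // z _ Hz; apply: Hz. Qed.

Lemma card_seq_set (s : seq 'I_N) : uniq s -> #|[set z | z \in s]| = size s.
Proof. by move=> Hu; rewrite cardsE; apply/card_uniqP. Qed.

Lemma case1 i : m <= 2 * deg vmin + 1 -> contains n (T_adj n i) H.
Proof.
move=> Hc; set d := deg vmin.
have [x [q [Hgood Hmax]]] := exists_longest g (in_setT x0N).
have Hdeg : forall y, y \in setT -> d <= #|[set z in setT | g y z]|.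
  move=> y _; have -> : [set z in setT | g y z] = [set z | g y z].
    by apply/setP => z; rewrite !inE.
  exact: v_min.
move: (Hgood) => /and3P[Hp Hu _].
have Hk := short Hp Hu.
have Hsz : size q < 2 * d by move: Hk Hc => /=; clear; lia.
have Hcl := core gs gi Hdeg Hgood Hmax Hsz.
set P := [set z | z \in x :: q].
have HP : #|P| = (size q).+1 by rewrite card_seq_set.
have HPQ : #|P| + #|~: P| = N by rewrite cardsC card_ord.
have Hx : d <= #|P| - 1.
  have : [set z | g x z] \subset P :\ x.
    apply/subsetP => z; rewrite !inE => gxz.
    have -> : z != x by apply/eqP => zx; move: gxz; rewrite zx gi.
    apply/negPn/negP => zq; move: (Hcl z x (in_setT _) zq (mem_head _ _)).
    by rewrite gs gxz.
  move/subset_leq_card => H2; have H1 := cardsD1 x P; have H0 := v_min x.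
  move: H1; rewrite inE mem_head /= => H1.
  have H3 : deg x <= #|P :\ x| by [].
  rewrite -/d in H0; by rewrite H1 addKn; apply: leq_trans H0 H3.
have [y yQ] : exists y, y \in ~: P.
  apply/set0Pn; rewrite -card_gt0.
  move: HPQ HP Hk Hm2 HN Hn => /=; clear; lia.
have Hy : d <= #|~: P| - 1.
  have : [set z | g y z] \subset ~: P :\ y.
    apply/subsetP => z; rewrite !inE => gyz.
    have -> : z != y by apply/eqP => zy; move: gyz; rewrite zy gi.
    have yn : y \notin x :: q by move: yQ; rewrite !inE.
    by apply/negP => zq; move: (Hcl y z (in_setT _) yn zq); rewrite gyz.
  move/subset_leq_card => H2; have H1 := cardsD1 y (~: P); have H0 := v_min y.
  move: H1; rewrite yQ /= => H1.
  have H3 : deg y <= #|~: P :\ y| by [].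
  by rewrite -/d in H0; rewrite H1 addKn; apply: leq_trans H0 H3.
have Hd2 : 2 <= d by move: Hc Hm1 Hn; clear; lia.
have Hb : forall a b, a \in P -> b \in ~: P -> H a b.
  move=> a b aP bQ; rewrite /H /compl_graph.
  have -> : a != b by apply/eqP => ab; move: bQ; rewrite inE -ab aP.
  rewrite gs; apply: Hcl => //; first by move: bQ; rewrite !inE.
  by move: aP; rewrite inE.
have Hn5 : 5 <= n by clear -Hn; lia.
case: (leqP (n - 3) #|P|) => HP3.
  have H3 : 3 <= #|~: P| by move: Hy Hd2; clear; lia.
  apply: (@bip_embed N H n i (~: P) P Hsym Hirr Hn5 H3 HP3).
  by move=> a b aQ bP; rewrite Hsym; apply: Hb.
have H3 : 3 <= #|P| by move: Hx Hd2; clear; lia.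
have H4 : n - 3 <= #|~: P| by move: HPQ HP3 HN Hn; clear; lia.
exact: (@bip_embed N H n i P (~: P) Hsym Hirr Hn5 H3 H4 Hb).
Qed.


Definition Sv := [set y | H vmin y].
Lemma card_S : #|Sv| = N - 1 - deg vmin.
Proof.
set D := [set y | g vmin y].
have HS : Sv = (~: D) :\ vmin.
  by apply/setP => y; rewrite /Sv /D !inE /H /compl_graph eq_sym.
have H1 := cardsC D; have H2 := cardsD1 vmin (~: D).
have vD : vmin \in ~: D by rewrite !inE gi.
rewrite vD card_ord -HS in H2 H1 *; rewrite /deg -/D.
move: H1 H2; clear; lia.
Qed.

Lemma vS : vmin \notin Sv.
Proof. by rewrite inE Hirr. Qed.
Lemma S_neq z : z \in Sv -> z != vmin.
Proof. by move=> zS; apply/eqP => zv; move: vS; rewrite -zv zS. Qed.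

Lemma arith2 : 2 * deg vmin + 2 <= m ->
  [/\ n - 1 <= #|Sv|, m.+1 <= #|Sv| & m + 3 <= N].
Proof.
move=> Hc; rewrite card_S; move: Hc HN Hn Hm1 Hm2 Hm3; clear; split; lia.
Qed.


Lemma T2_part i : i <> 1 -> 2 * deg vmin + 2 <= m -> contains n (T_adj n i) H.
Proof.
move=> Hi1 Hc; have [Hs1 Hs2 Hs3] := arith2 Hc.
have Hn5 : 5 <= n by clear -Hn; lia.
case: (classic (exists u w1 w2, [/\ u \in Sv, H u w1, H u w2 & [&& w1 != vmin, w2 != vmin & w1 != w2]])).
  move=> [u [w1 [w2 [uS Hw1 Hw2 /and3P[w1v w2v w12]]]]].
  set R := Sv :\ u :\ w1 :\ w2.
  have HR : n - 4 <= #|R|.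
    rewrite /R; have := card_D1 Sv u; have := card_D1 (Sv :\ u) w1; have := card_D1 (Sv :\ u :\ w1) w2.
    move: Hs1; clear; lia.
  have [L [HL UL RL]] := take_set HR.
  have LS : forall x, x \in L -> [/\ x \in Sv, x != u, x != w1 & x != w2].
    by move=> x /RL /setD1P[? /setD1P[? /setD1P[? ?]]].
  have vu : vmin != u by apply: Hneq; move: uS; rewrite inE.
  apply: (@tree_embed N H n i vmin (L ++ [:: u]) w1 w2 Hsym Hn5).
  - by rewrite size_cat HL /=; clear -Hn; lia.
  - have Hp : perm_eq (vmin :: (L ++ [:: u]) ++ [:: w1; w2]) (L ++ [:: vmin; u; w1; w2]).
      by rewrite -catA -cat1s perm_catCA.
    rewrite (perm_uniq Hp); apply: uniq_split => //.
      rewrite /= !inE !negb_or vu (eq_sym vmin w1) w1v (eq_sym vmin w2) w2v w12 /=.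
      by rewrite (Hneq Hw1) (Hneq Hw2).
    move=> x /LS[xS xu xw1 xw2]; rewrite !inE (negbTE xu) (negbTE xw1) (negbTE xw2).
    by rewrite (negbTE (S_neq xS)).
  - move=> l; rewrite mem_cat => /orP[/LS[lS _ _ _]|]; first by move: lS; rewrite inE.
    by rewrite inE => /eqP->; move: uS; rewrite inE.
  - by move=> /Hi1.
  - have -> : nth vmin (L ++ [:: u]) (n - 4) = u by rewrite nth_cat HL ltnn subnn.
    by [].
move=> Hno.
have Hbad : forall u, u \in Sv -> #|[set z in Sv | H u z]| <= 1.
  move=> u uS; rewrite leqNgt; apply/negP => /card_gt1P[w1 [w2 [w1B w2B w12]]].
  move: w1B w2B => /setIdP[w1S Hw1] /setIdP[w2S Hw2].
  by apply: Hno; exists u, w1, w2; split=> //; rewrite w12 !S_neq.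
have Hdeg : forall u, u \in Sv -> #|Sv| - 2 <= #|[set z in Sv | g u z]|.
  move=> u uS.
  have sub : Sv :\ u \subset [set z in Sv | g u z] :|: [set z in Sv | H u z].
    apply/subsetP => z /setD1P[zu zS]; rewrite in_setU; apply/orP.
    case Hz: (H u z); [right | left]; apply/setIdP; split => //.
    by apply: notH; rewrite ?Hz // eq_sym.
  have := subset_leq_card sub; rewrite cardsU; have := card_D1 Sv u; have := Hbad u uS.
  clear; lia.
have [u0 u0S] : exists u, u \in Sv by apply/set0Pn; rewrite -card_gt0; clear -Hs1 Hn; lia.
have [x [q [Hgood Hmax]]] := exists_longest g u0S.
move: (Hgood) => /and3P[Hp Hu Ha].
have Hk := short Hp Hu.
have HsubP : [set z | z \in x :: q] \subset Sv.
  by apply/subsetP => z; rewrite inE => /(allP Ha).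
have Hkq : (size q).+1 <= #|Sv|.
  by rewrite -[(size q).+1]/(size (x :: q)) -card_seq_set //; exact: subset_leq_card HsubP.
have Hsz : size q < 2 * (#|Sv| - 2) by move: Hkq Hs1 Hn; clear; lia.
have Hcl := core gs gi Hdeg Hgood Hmax Hsz.
have xS : x \in Sv := allP Ha x (mem_head _ _).
have Hcov : Sv \subset [set z | z \in x :: q].
  apply/subsetP => y yS; rewrite inE; apply/negPn/negP => yq.
  set Gx := [set z in Sv | g x z]; set Gy := [set z in Sv | g y z].
  have yx : y != x by apply/eqP => xy; move: yq; rewrite xy mem_head.
  have HGx : forall z, z \in Gx -> z \in x :: q.
    move=> z /setIdP[zS gxz]; apply/negPn/negP => zq.
    by move: (Hcl z x zS zq (mem_head _ _)); rewrite gs gxz.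
  have HGy : forall z, z \in Gy -> z \notin x :: q.
    move=> z /setIdP[zS gyz]; apply/negP => zq.
    by move: (Hcl y z yS yq zq); rewrite gyz.
  have HI : Gx :&: Gy = set0.
    apply/setP => z; rewrite inE in_set0; apply/negP => /andP[/HGx zq /HGy].
    by rewrite zq.
  have HU : Gx :|: Gy \subset Sv :\ x :\ y.
    apply/subsetP => z; rewrite in_setU => /orP[zG|zG].
      move: (zG) => /setIdP[zS gxz]; move: (HGx z zG) => zq.
      rewrite !in_setD1 zS andbT; apply/andP; split.
        by apply/eqP => zy; move: yq; rewrite -zy zq.
      by apply/eqP => zx; move: gxz; rewrite zx gi.
    move: (zG) => /setIdP[zS gyz]; move: (HGy z zG) => zq.
    rewrite !in_setD1 zS andbT; apply/andP; split.
      by apply/eqP => zy; move: gyz; rewrite zy gi.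
    by apply/eqP => zx; move: zq; rewrite zx mem_head.
  have yS' : y \in Sv :\ x by rewrite in_setD1 yx yS.
  have := subset_leq_card HU; rewrite cardsU HI cards0 subn0.
  have := cardsD1 x Sv; have := cardsD1 y (Sv :\ x); rewrite xS yS'.
  have h1 := Hdeg x xS; have h2 := Hdeg y yS; rewrite -/Gx in h1; rewrite -/Gy in h2.
  move: h1 h2 Hs1 Hn; clear; lia.
have := subset_leq_card Hcov; rewrite card_seq_set //.
by move: Hk Hs2 => /=; clear; lia.
Qed.


Lemma T1_part : 2 * deg vmin + 2 <= m -> contains n (T_adj n 1) H.
Proof.
move=> Hc; have [Hs1 Hs2 Hs3] := arith2 Hc.
have Hn5 : 5 <= n by clear -Hn; lia.
case: (classic (exists u1 w1 u2 w2, [/\ u1 \in Sv, u2 \in Sv, H u1 w1, H u2 w2 &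
   [&& w1 != vmin, w2 != vmin, u2 != u1 & [&& u2 != w1, w2 != u1 & w2 != w1]]])).
  move=> [u1 [w1 [u2 [w2 [u1S u2S Hw1 Hw2 /and4P[w1v w2v u21 /and3P[u2w1 w2u1 w21]]]]]]].
  set R := Sv :\ u1 :\ u2 :\ w1 :\ w2.
  have HR : n - 5 <= #|R|.
    rewrite /R; have := card_D1 Sv u1; have := card_D1 (Sv :\ u1) u2.
    have := card_D1 (Sv :\ u1 :\ u2) w1; have := card_D1 (Sv :\ u1 :\ u2 :\ w1) w2.
    move: Hs1; clear; lia.
  have [L [HL UL RL]] := take_set HR.
  have LS : forall x, x \in L -> [/\ x \in Sv, x != u1, x != u2 & [&& x != w1 & x != w2]].
    by move=> x /RL /setD1P[? /setD1P[? /setD1P[? /setD1P[? ?]]]]; split=> //; apply/andP.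
  have vu1 : vmin != u1 by apply: Hneq; move: u1S; rewrite inE.
  have vu2 : vmin != u2 by apply: Hneq; move: u2S; rewrite inE.
  have vw1 : vmin != w1 by rewrite eq_sym.
  have vw2 : vmin != w2 by rewrite eq_sym.
  have u12 : u1 != u2 by rewrite eq_sym.
  have u1w1 : u1 != w1 := Hneq Hw1.
  have u1w2 : u1 != w2 by rewrite eq_sym.
  have u2w2 : u2 != w2 := Hneq Hw2.
  have w12 : w1 != w2 by rewrite eq_sym.
  apply: (@tree_embed N H n 1 vmin (L ++ [:: u1; u2]) w1 w2 Hsym Hn5).
  - by rewrite size_cat HL /=; clear -Hn; lia.
  - have Hp : perm_eq (vmin :: (L ++ [:: u1; u2]) ++ [:: w1; w2]) (L ++ [:: vmin; u1; u2; w1; w2]).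
      by rewrite -catA -cat1s perm_catCA.
    rewrite (perm_uniq Hp); apply: uniq_split => //.
      by rewrite /= !inE !negb_or vu1 vu2 vw1 vw2 u12 u1w1 u1w2 u2w1 u2w2 w12.
    move=> x /LS[xS xu1 xu2 /andP[xw1 xw2]].
    by rewrite !inE (negbTE xu1) (negbTE xu2) (negbTE xw1) (negbTE xw2) (negbTE (S_neq xS)).
  - move=> l; rewrite mem_cat => /orP[/LS[lS _ _ _]|]; first by move: lS; rewrite inE.
    by rewrite !inE => /orP[] /eqP->; [move: u1S | move: u2S]; rewrite inE.
  - move=> _.
    have -> : nth vmin (L ++ [:: u1; u2]) (n - 5) = u1 by rewrite nth_cat HL ltnn subnn.
    have -> : nth vmin (L ++ [:: u1; u2]) (n - 4) = u2.
      rewrite nth_cat HL; have -> : n - 4 < n - 5 = false by clear -Hn; lia.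
      by have -> : n - 4 - (n - 5) = 1 by clear -Hn; lia.
    by [].
  - by [].
move=> Hno.
case: (classic (exists u1 w1, [/\ u1 \in Sv, H u1 w1 & w1 != vmin])).
  move=> [u1 [w1 [u1S Hw1 w1v]]].
  set Z := Sv :\ u1 :\ w1.
  have key : forall z b, z \in Z -> b != vmin -> b != u1 -> b != w1 -> b != z -> g z b.
    move=> z b /setD1P[zw1 /setD1P[zu1 zS]] bv bu bw bz.
    apply: notH; last by rewrite eq_sym.
    apply/negP => Hzb; apply: Hno; exists u1, w1, z, b; split=> //.
    by rewrite w1v bv zu1 zw1 bu bw.
  have HZ : m - 1 <= #|Z|.
    rewrite /Z; have := card_D1 Sv u1; have := card_D1 (Sv :\ u1) w1.
    move: Hs2; clear; lia.
  have [Z' [HZ' UZ' ZZ']] := take_set HZ.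
  set W := [set z | z \in [:: vmin, u1, w1 & Z']].
  have HW : #|W| < N.
    rewrite /W cardsE; apply: (leq_ltn_trans (card_size _)); rewrite /= HZ'.
    move: Hs3 Hm1 Hn; clear; lia.
  have [y yW] : exists y, y \in ~: W.
    apply/set0Pn; rewrite -card_gt0; have := cardsC W; rewrite card_ord.
    move: HW; clear; lia.
  move: yW; rewrite !inE !negb_or => /and4P[yv yu1 yw1 yZ'].
  have Hzn : forall z, z \in Z' -> [&& z != vmin, z != u1 & z != w1].
    move=> z /ZZ' /setD1P[zw1 /setD1P[zu1 zS]].
    by rewrite zu1 zw1 (S_neq zS).
  have Hpath : path g y Z'.
    apply: clique_path; first by rewrite cons_uniq yZ' UZ'.
    have Hmem : forall a b, a \in Z' -> b \in y :: Z' -> a != b -> g a b.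
      move=> a b aZ bY ab; apply: key; first exact: ZZ'.
      + by move: bY; rewrite in_cons => /orP[/eqP->|/Hzn /and3P[? ? ?]].
      + by move: bY; rewrite in_cons => /orP[/eqP->|/Hzn /and3P[? ? ?]].
      + by move: bY; rewrite in_cons => /orP[/eqP->|/Hzn /and3P[? ? ?]].
      + by rewrite eq_sym.
    move=> a b; rewrite in_cons => /orP[/eqP->|aZ] bY ab.
      move: bY ab; rewrite in_cons => /orP[/eqP->|bZ]; first by rewrite eqxx.
      by move=> yb; rewrite gs; apply: Hmem => //; [rewrite mem_head | rewrite eq_sym].
    exact: Hmem.
  have := short Hpath; rewrite cons_uniq yZ' UZ' /= HZ' => /(_ isT).
  by move: Hm1 Hn; clear; lia.
move=> Hno2.
have Hcl : {in Sv &, forall a b, a != b -> g a b}.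
  move=> a b aS bS ab; apply: notH => //; apply/negP => Hab; apply: Hno2.
  by exists a, b; split=> //; apply: S_neq.
case E: (enum Sv) => [|x q].
  by move: Hs1; rewrite cardE E /=; clear -Hn; lia.
have Hu : uniq (x :: q) by rewrite -E enum_uniq.
have Hp : path g x q.
  by apply: clique_path => // a b; rewrite -E !mem_enum; apply: Hcl.
have := short Hp Hu; rewrite -E -cardE.
by move: Hs2; clear; lia.
Qed.

End Upper.

Lemma upper_all n m i : 8 <= n -> n - 3 <= m -> m <= n -> 3 * m + 16 <= 4 * n ->
  ramsey_prop m path_adj n (T_adj n i) (2 * n - 7).
Proof.
move=> Hn Hm1 Hm2 Hm3 g Hg.
case: (classic (contains m path_adj g)) => [|NP]; [by left | right].
have HN : 2 * n - 7 = 2 * n - 7 by [].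
case: (leqP m (2 * deg g (vmin g HN Hn) + 1)) => Hc.
  exact: (case1 Hm1 Hm2 Hg NP i Hc).
have Hc' : 2 * deg g (vmin g HN Hn) + 2 <= m by move: Hc; clear; lia.
case: (eqVneq i 1) => [->|Hi].
  exact: (T1_part Hm1 Hm2 Hm3 Hg NP Hc').
by apply: (T2_part Hm1 Hm2 Hm3 Hg NP _ Hc'); apply/eqP.
Qed.

Lemma rn_all n m i : 8 <= n -> n - 3 <= m -> m <= n -> 3 * m + 16 <= 4 * n ->
  ramsey_number_is m path_adj n (T_adj n i) (2 * n - 7).
Proof.
move=> Hn Hm1 Hm2 Hm3; split; first by clear -Hn; lia.
split; first exact: upper_all.
move=> M HM0 HM; apply: lower_bound => //; clear -HM; lia.
Qed.

Theorem theorem4p3 (n i : nat) (Hi : i = 1 \/ i = 2) :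
  (17 <= n -> ramsey_number_is n path_adj n (T_adj n i) (2 * n - 7)) /\
  (13 <= n -> ramsey_number_is (n - 1) path_adj n (T_adj n i) (2 * n - 7)) /\
  (11 <= n -> ramsey_number_is (n - 2) path_adj n (T_adj n i) (2 * n - 7)) /\
  (8 <= n -> ramsey_number_is (n - 3) path_adj n (T_adj n i) (2 * n - 7)).
Proof.
split; [|split; [|split]] => Hn; apply: rn_all; clear -Hn; lia.
Qed.
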